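(* Let $B>0$ and $z>0$, and set $z_0:=\max\left(z,\ \frac{\pi}{B^2 e}\right)$. If $\nu\geq 1$ satisfies $$\nu\;\geq\;\frac12+\frac{\log(B)+z_0-\frac12\log\!\left(\frac{\pi}{z_0 e}\right)}{W_0\!\left(\frac{2}{z_0 e}\left(\log(B)+z_0-\frac12\log\!\left(\frac{\pi}{z_0 e}\right)\right)\right)},$$ then $K_\nu(z)>B$.
   Context: $K_\nu$ denotes the modified Bessel function of the second kind of real order $\nu$, considered for real argument $z>0$. $W_0$ denotes the principal branch of the Lambert $W$ function (the inverse of $w\mapsto we^w$ on $[-1,\infty)$). *)

(* Defs.v *)
From Stdlib Require Import Reals ClassicalEpsilon.
From Coquelicot Require Import Coquelicot.
Open Scope R_scope.

(* Modified Bessel function of the second kind, real order nu, argument z > 0,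
   via the standard integral representation (DLMF 10.32.9):
   K_nu(z) = \int_0^\infty exp(-z cosh t) cosh(nu t) dt. *)
Definition BesselK (nu z : R) : R :=
  RInt_gen (fun t => exp (- z * cosh t) * cosh (nu * t))
           (at_point 0) (Rbar_locally p_infty).

(* Principal branch of Lambert W: for x >= -1/e, the unique w >= -1 with
   w * exp w = x (arbitrary value outside the domain). *)
Definition LambertW0 (x : R) : R :=
  epsilon (inhabits 0) (fun w => -1 <= w /\ w * exp w = x).

(* Main.v *)
Require Import Defs.
From Stdlib Require Import Reals.
From Coquelicot Require Import Coquelicot.
From Stdlib Require Import Lra Psatz ClassicalEpsilon.
Open Scope R_scope.

Lemma PI_ub32 : PI <= 16/5.
Proof.
  destruct (Rle_or_lt PI (16/5)) as [H|H]; [exact H|].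
  exfalso.
  assert (H1 := SIN (16/5) ltac:(lra) ltac:(lra)).
  assert (H2 : 0 < sin (16/5)) by (apply sin_gt_0; lra).
  unfold sin_ub, sin_approx in H1.
  cbv [sum_f_R0 sin_term] in H1.
  replace (2*0+1)%nat with 1%nat in H1 by reflexivity.
  replace (2*1+1)%nat with 3%nat in H1 by reflexivity.
  replace (2*2+1)%nat with 5%nat in H1 by reflexivity.
  replace (2*3+1)%nat with 7%nat in H1 by reflexivity.
  replace (2*4+1)%nat with 9%nat in H1 by reflexivity.
  rewrite !fact_simpl, !mult_INR in H1.
  cbv [Factorial.fact] in H1.
  rewrite !S_INR, !INR_0 in H1.
  simpl pow in H1.
  lra.
Qed.

Lemma ln_le_sub1 y : 0 < y -> ln y <= y - 1.
Proof. intro Hy. pose proof (exp_ineq1_le (ln y)). rewrite exp_ln in H; lra. Qed.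

Lemma nonneg_deriv (f df : R -> R) X : 0 <= X ->
  (forall t, 0 <= t <= X -> is_derive f t (df t)) ->
  (forall t, 0 <= t <= X -> 0 <= df t) -> 0 <= f 0 -> 0 <= f X.
Proof.
  intros HX Hd Hp H0.
  destruct (MVT_gen f 0 X df) as [c [Hc Heq]].
  - intros x Hx. apply Hd. rewrite Rmin_left, Rmax_right in Hx; lra.
  - intros x Hx. rewrite Rmin_left, Rmax_right in Hx by lra.
    apply continuity_pt_filterlim. apply (ex_derive_continuous (K:=R_AbsRing) (V:=R_NormedModule)).
    eexists. apply Hd; lra.
  - rewrite Rmin_left, Rmax_right in Hc by lra.
    assert (0 <= df c * (X - 0)) by (apply Rmult_le_pos; [apply Hp; lra| lra]).
    lra.
Qed.

Lemma ln_1px_lb x : 0 <= x -> 2 * x / (2 + x) <= ln (1 + x).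
Proof.
  intro Hx.
  set (f := fun t => ln (1 + t) - 2 * t / (2 + t)).
  assert (0 <= f x).
  { apply (nonneg_deriv f (fun t => t^2 / ((1+t)*(2+t)^2))); auto.
    - intros t Ht. unfold f. auto_derive. lra. field. lra.
    - intros t Ht. apply Rmult_le_pos. nra. apply Rlt_le, Rinv_0_lt_compat. nra.
    - unfold f. rewrite Rplus_0_r, ln_1. lra. }
  unfold f in H. lra.
Qed.


Lemma step_lemma (f df : R -> R) :
  (forall t, 0 <= t <= 2 -> is_derive f t (df t)) ->
  (forall t, 0 <= t <= 2 -> 0 <= df t) -> f 0 = 0 ->
  forall t, 0 <= t <= 2 -> 0 <= f t.
Proof.
  intros Hd Hp H0 t Ht. apply (nonneg_deriv f df t); try lra.
  intros; apply Hd; lra. intros; apply Hp; lra.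
Qed.

Lemma sinh_ub h : 0 <= h <= 2 ->
  (exp h - exp (-h))/2 <= h + h^3/6 + h^5/120 + h^7/1000.
Proof.
  intro Hh.
  assert (H7 : forall t, 0 <= t <= 2 -> 0 <= 5040/1000 - (exp t + exp (-t))/2).
  { intros t Ht.
    assert (exp t <= exp 2) by (apply exp_le_3 || (destruct (Req_dec t 2); [subst; lra| left; apply exp_increasing; lra])).
    assert (exp 2 = exp 1 * exp 1) by (rewrite <- exp_plus; f_equal; lra).
    pose proof exp_le_3. pose proof (exp_pos 1).
    assert (exp (-t) <= 1) by (rewrite <- exp_0; destruct (Req_dec t 0); [subst; rewrite Ropp_0; lra| left; apply exp_increasing; lra]).
    nra. }
  assert (H6 : forall t, 0 <= t <= 2 -> 0 <= 5040/1000*t - (exp t - exp (-t))/2).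
  { apply (step_lemma _ (fun t => 5040/1000 - (exp t + exp (-t))/2)); auto.
    intros; auto_derive; auto; lra. rewrite Ropp_0, exp_0; lra. }
  assert (H5 : forall t, 0 <= t <= 2 -> 0 <= 1 + 2520/1000*t^2 - (exp t + exp (-t))/2).
  { apply (step_lemma (fun t => 1 + 2520/1000*t^2 - (exp t + exp (-t))/2) (fun t => 5040/1000*t - (exp t - exp (-t))/2)).
    - intros t Ht; auto_derive; try easy; simpl; lra.
    - exact H6.
    - rewrite Ropp_0, exp_0; lra. }
  assert (H4 : forall t, 0 <= t <= 2 -> 0 <= t + 840/1000*t^3 - (exp t - exp (-t))/2).
  { apply (step_lemma (fun t => t + 840/1000*t^3 - (exp t - exp (-t))/2) (fun t => 1 + 2520/1000*t^2 - (exp t + exp (-t))/2)).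
    - intros t Ht; auto_derive; try easy; simpl; lra.
    - exact H5.
    - rewrite Ropp_0, exp_0; lra. }
  assert (H3 : forall t, 0 <= t <= 2 -> 0 <= 1 + t^2/2 + 210/1000*t^4 - (exp t + exp (-t))/2).
  { apply (step_lemma (fun t => 1 + t^2/2 + 210/1000*t^4 - (exp t + exp (-t))/2) (fun t => t + 840/1000*t^3 - (exp t - exp (-t))/2)).
    - intros t Ht; auto_derive; try easy; simpl; lra.
    - exact H4.
    - rewrite Ropp_0, exp_0; lra. }
  assert (H2 : forall t, 0 <= t <= 2 -> 0 <= t + t^3/6 + 42/1000*t^5 - (exp t - exp (-t))/2).
  { apply (step_lemma (fun t => t + t^3/6 + 42/1000*t^5 - (exp t - exp (-t))/2) (fun t => 1 + t^2/2 + 210/1000*t^4 - (exp t + exp (-t))/2)).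
    - intros t Ht; auto_derive; try easy; simpl; lra.
    - exact H3.
    - rewrite Ropp_0, exp_0; lra. }
  assert (H1 : forall t, 0 <= t <= 2 -> 0 <= 1 + t^2/2 + t^4/24 + 7/1000*t^6 - (exp t + exp (-t))/2).
  { apply (step_lemma (fun t => 1 + t^2/2 + t^4/24 + 7/1000*t^6 - (exp t + exp (-t))/2) (fun t => t + t^3/6 + 42/1000*t^5 - (exp t - exp (-t))/2)).
    - intros t Ht; auto_derive; try easy; simpl; lra.
    - exact H2.
    - rewrite Ropp_0, exp_0; lra. }
  assert (H0 : forall t, 0 <= t <= 2 -> 0 <= t + t^3/6 + t^5/120 + t^7/1000 - (exp t - exp (-t))/2).
  { apply (step_lemma (fun t => t + t^3/6 + t^5/120 + t^7/1000 - (exp t - exp (-t))/2) (fun t => 1 + t^2/2 + t^4/24 + 7/1000*t^6 - (exp t + exp (-t))/2)).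
    - intros t Ht; auto_derive; try easy; simpl; lra.
    - exact H1.
    - rewrite Ropp_0, exp_0; lra. }
  pose proof (H0 h Hh). lra.
Qed.


Section Bess.
Variables (z nu : R) (hz : 0 < z) (hnu : 0 <= nu).
Let f := fun t => exp (- z * cosh t) * cosh (nu * t).

Lemma f_cont t : continuous f t.
Proof.
  apply (ex_derive_continuous (K:=R_AbsRing) (V:=R_NormedModule)).
  unfold f, cosh. auto_derive. auto.
Qed.

Lemma f_exRInt a b : ex_RInt f a b.
Proof. apply (ex_RInt_continuous (V:=R_CompleteNormedModule)). intros; apply f_cont. Qed.

Lemma cosh_pos x : 0 < cosh x.
Proof. unfold cosh. pose proof (exp_pos x); pose proof (exp_pos (-x)); lra. Qed.

Lemma f_nonneg t : 0 <= f t.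
Proof. unfold f. apply Rmult_le_pos; [left; apply exp_pos| left; apply cosh_pos]. Qed.

Definition Cb := exp ((nu+1) * (ln (2*(nu+1)/z) - 1)).

Lemma f_bound t : 0 <= t -> f t <= Cb * exp (- t).
Proof.
  intro Ht. unfold f, Cb.
  assert (h1 : cosh (nu * t) <= exp (nu * t)).
  { unfold cosh. assert (exp (- (nu*t)) <= exp (nu*t)).
    { destruct (Req_dec (nu*t) 0) as [E|E]. rewrite E, Ropp_0; lra.
      left; apply exp_increasing. nra. }
    lra. }
  assert (h2 : exp t / 2 <= cosh t).
  { unfold cosh. pose proof (exp_pos (-t)); lra. }
  set (w := 2*(nu+1)/z).
  assert (hw : 0 < w) by (unfold w; apply Rdiv_lt_0_compat; lra).
  assert (h3 : ln (exp t / w) <= exp t / w - 1) by (apply ln_le_sub1; apply Rdiv_lt_0_compat; [apply exp_pos|lra]).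
  rewrite ln_div, ln_exp in h3 by (try apply exp_pos; lra).
  assert (h4 : (nu+1)*(exp t / w) = z * (exp t/2)) by (unfold w; field; lra).
  assert (h5 : - z * cosh t + nu * t <= (nu + 1) * (ln w - 1) + - t) by nra.
  apply Rle_trans with (exp (- z * cosh t) * exp (nu * t)).
  { apply Rmult_le_compat_l; [left; apply exp_pos| exact h1]. }
  rewrite <- !exp_plus. destruct h5 as [h5|h5]; [left; apply exp_increasing, h5 | rewrite h5; lra].
Qed.

Let G M := RInt f 0 M.

Lemma tail_bound M M' : 0 <= M <= M' -> 0 <= G M' - G M <= Cb * exp (- M).
Proof.
  intro HM. unfold G.
  rewrite <- (RInt_Chasles f 0 M M') by apply f_exRInt.
  change (plus ?a ?b) with (a + b).
  assert (Hint : is_RInt (fun t => Cb * exp (-t)) M M' (Cb * exp (- M) - Cb * exp (- M'))).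
  { replace (Cb * exp (- M) - Cb * exp (- M')) with (minus (- Cb * exp (- M')) (- Cb * exp (- M)))
      by (unfold minus, plus, opp; simpl; ring).
    apply (is_RInt_derive (fun t => - Cb * exp (- t))).
    - intros; auto_derive; auto; ring.
    - intros x _. apply (ex_derive_continuous (K:=R_AbsRing) (V:=R_NormedModule)). auto_derive. auto. }
  split.
  - assert (0 <= RInt f M M').
    { apply RInt_ge_0; try lra. apply f_exRInt. intros; apply f_nonneg. }
    lra.
  - assert (RInt f M M' <= RInt (fun t => Cb * exp (-t)) M M').
    { apply RInt_le; try lra. apply f_exRInt. eexists; exact Hint.
      intros; apply f_bound; lra. }
    rewrite (is_RInt_unique _ _ _ _ Hint) in H.
    pose proof (exp_pos (- M')). assert (0 < Cb) by apply exp_pos. nra.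
Qed.


Lemma G_lim : { l | forall M, 0 <= M -> G M <= l <= G M + Cb * exp (- M) }.
Proof.
  set (E := fun y => exists M, 0 <= M /\ y = G M).
  assert (HG0 : G 0 = 0) by (unfold G; rewrite RInt_point; reflexivity).
  destruct (completeness E) as [l [Hub Hlub]].
  - exists Cb. intros y [M [HM ->]]. pose proof (tail_bound 0 M ltac:(lra)).
    rewrite HG0, Ropp_0, exp_0 in H. lra.
  - exists (G 0). exists 0. split; [lra|reflexivity].
  - exists l. intros M HM. split.
    + apply Hub. exists M. split; [lra|reflexivity].
    + apply Hlub. intros y [M' [HM' ->]].
      destruct (Rle_or_lt M M').
      * pose proof (tail_bound M M' ltac:(lra)). lra.
      * pose proof (tail_bound M' M ltac:(lra)). pose proof (exp_pos (-M)).
        assert (0 < Cb) by apply exp_pos. nra.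
Qed.

Lemma BesselK_ge M : 0 <= M -> G M <= BesselK nu z.
Proof.
  destruct G_lim as [l Hl].
  assert (Hgen : is_RInt_gen f (at_point 0) (Rbar_locally p_infty) l).
  { intros P [eps Heps].
    assert (0 < Cb) by apply exp_pos.
    set (M0 := Rmax 0 (ln (Cb / eps))).
    apply (Filter_prod _ _ _ (fun a => a = 0) (fun b => M0 < b)).
    - reflexivity.
    - exists M0. auto.
    - intros a b -> Hb. exists (G b). split.
      + apply (RInt_correct (V:=R_CompleteNormedModule)). apply f_exRInt.
      + apply Heps. change (Rabs (G b - l) < eps).
        assert (Hb0 : 0 <= b) by (unfold M0 in Hb; pose proof (Rmax_l 0 (ln (Cb/eps))); lra).
        destruct (Hl b Hb0).
        assert (Cb * exp (- b) < eps).
        { assert (ln (Cb/eps) < b) by (unfold M0 in Hb; pose proof (Rmax_r 0 (ln (Cb/eps))); lra).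
          assert (exp (ln (Cb/eps)) < exp b) by (apply exp_increasing; lra).
          rewrite exp_ln in H3 by (apply Rdiv_lt_0_compat; [lra| apply cond_pos]).
          rewrite exp_Ropp.
          pose proof (exp_pos b). pose proof (cond_pos eps).
          apply (Rmult_lt_reg_r (exp b)); auto.
          rewrite Rmult_assoc, Rinv_l by lra.
          apply (Rmult_lt_reg_r (/ eps)). apply Rinv_0_lt_compat; lra.
          replace (eps * exp b * / eps) with (exp b) by (field; lra).
          unfold Rdiv in H3. lra. }
        rewrite Rabs_left1; lra. }
  unfold BesselK. fold f.
  rewrite (is_RInt_gen_unique _ _ Hgen).
  intro HM. destruct (Hl M HM). lra.
Qed.

End Bess.


Ltac exri := apply (ex_RInt_continuous (V:=R_CompleteNormedModule)); intros;
  apply (ex_derive_continuous (K:=R_AbsRing) (V:=R_NormedModule)); unfold cosh; auto_derive; auto.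

Lemma RInt_opp_even (E : R -> R) M : (forall t, continuous E t) ->
  RInt E (-M) 0 = RInt (fun t => E (- t)) 0 M.
Proof.
  intro HE.
  assert (Hex : ex_RInt E (-M) (-0)).
  { apply (ex_RInt_continuous (V:=R_CompleteNormedModule)). intros; apply HE. }
  destruct Hex as [l Hl].
  pose proof (is_RInt_comp_opp E M 0 l Hl) as H2.
  rewrite Ropp_0 in Hl. rewrite (is_RInt_unique _ _ _ _ Hl).
  apply is_RInt_swap in H2.
  apply is_RInt_opp in H2.
  assert (H3 : is_RInt (fun t => E (- t)) 0 M (opp (opp l))).
  { eapply is_RInt_ext; [|exact H2]. intros. simpl. apply opp_opp. }
  rewrite (is_RInt_unique _ _ _ _ H3). symmetry; apply opp_opp.
Qed.

Lemma cosh_even x : cosh (- x) = cosh x.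
Proof. unfold cosh. rewrite Ropp_involutive. lra. Qed.

Lemma K_lower (z Z nu c h : R) : 0 < z -> z <= Z -> 0 <= nu -> 0 < h ->
  h * exp (- Z * cosh c * ((exp h - exp (-h))/2 / h) + nu * c) <= BesselK nu z.
Proof.
  intros hz hZ hnu hh.
  set (F := fun t => exp (- z * cosh t) * cosh (nu * t)).
  set (E := fun t => exp (- Z * cosh t + nu * t)).
  set (Sh := fun t => (exp t - exp (-t))/2).
  set (a := c - h). set (b := c + h).
  set (Ig := - Z * (Sh b - Sh a) + nu * (b^2 - a^2)/2).
  set (m := Ig / (2*h)).
  assert (Hm : m = - Z * cosh c * ((exp h - exp (-h))/2 / h) + nu * c).
  { unfold m, Ig, Sh, a, b, cosh.
    replace (- (c+h)) with (-c + -h) by ring. replace (- (c-h)) with (-c + h) by ring.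
    replace (c - h) with (c + - h) by ring.
    rewrite !exp_plus. field. lra. }
  rewrite <- Hm.
  (* Step 1: Jensen *)
  assert (J : 2 * h * exp m <= RInt E a b).
  { assert (Hl : is_RInt (fun t => exp m * (1 + (- Z * cosh t + nu * t) - m)) a b (exp m * ((1 - m) * (b - a) + Ig))).
    { replace (exp m * ((1 - m) * (b - a) + Ig)) with
        (minus (exp m * ((1-m) * b + (- Z * Sh b + nu * b^2/2))) (exp m * ((1-m) * a + (- Z * Sh a + nu * a^2/2))))
        by (unfold minus, plus, opp, Ig; simpl; match goal with |- ?A = ?B => change (@eq R A B) end; field).
      apply (is_RInt_derive (fun t => exp m * ((1-m) * t + (- Z * Sh t + nu * t^2/2)))).
      - intros. unfold Sh. auto_derive; auto. unfold cosh. simpl. field.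
      - intros. apply (ex_derive_continuous (K:=R_AbsRing) (V:=R_NormedModule)). unfold cosh; auto_derive; auto. }
    replace (2 * h * exp m) with (exp m * ((1 - m) * (b - a) + Ig)).
    2:{ unfold m, a, b. field. lra. }
    rewrite <- (is_RInt_unique _ _ _ _ Hl).
    apply RInt_le. unfold a, b; lra. eexists; exact Hl. unfold E; exri.
    intros t _. unfold E.
    pose proof (exp_ineq1_le (- Z * cosh t + nu * t - m)).
    replace (exp (- Z * cosh t + nu * t)) with (exp m * exp (- Z * cosh t + nu * t - m))
      by (rewrite <- exp_plus; f_equal; ring).
    apply Rmult_le_compat_l. left; apply exp_pos. lra. }
  set (M := Rabs c + h).
  assert (HaM : - M <= a) by (unfold a, M; pose proof (Rle_abs (-c)); rewrite Rabs_Ropp in H; lra).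
  assert (HbM : b <= M) by (unfold b, M; pose proof (Rle_abs c); lra).
  assert (HE0 : forall t, 0 <= E t) by (intros; left; apply exp_pos).
  assert (Hext : forall x y, ex_RInt E x y) by (intros; unfold E; exri).
  assert (St2 : RInt E a b <= RInt E (-M) M).
  { rewrite <- (RInt_Chasles E (-M) a M) by auto.
    rewrite <- (RInt_Chasles E a b M) by auto.
    repeat change (plus ?x ?y) with (x + y).
    assert (0 <= RInt E (-M) a) by (apply RInt_ge_0; auto).
    assert (0 <= RInt E b M) by (apply RInt_ge_0; auto; unfold a, b in *; lra).
    lra. }
  assert (St3 : RInt E (-M) M = RInt (fun t => E t + E (- t)) 0 M).
  { rewrite <- (RInt_Chasles E (-M) 0 M) by auto.
    repeat change (plus ?x ?y) with (x + y).
    rewrite RInt_opp_even.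
    2:{ intros; apply (ex_derive_continuous (K:=R_AbsRing) (V:=R_NormedModule)). unfold E, cosh; auto_derive; auto. }
    pose proof (RInt_plus (V:=R_CompleteNormedModule) E (fun t => E (- t)) 0 M) as HP.
    repeat change (plus ?x ?y) with (x + y) in HP. simpl in HP. rewrite HP; [lra | apply Hext | unfold E; exri]. }
  assert (HM0 : 0 <= M) by (unfold M; pose proof (Rabs_pos c); lra).
  assert (St4 : RInt (fun t => E t + E (- t)) 0 M <= RInt (fun t => 2 * F t) 0 M).
  { apply RInt_le; auto. unfold E; exri. unfold F; exri.
    intros t _. unfold E, F. rewrite cosh_even.
    rewrite !exp_plus.
    assert (exp (- Z * cosh t) <= exp (- z * cosh t)).
    { assert (0 < cosh t) by (unfold cosh; pose proof (exp_pos t); pose proof (exp_pos (-t)); lra).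
      destruct (Req_dec z Z). subst; lra. left; apply exp_increasing. nra. }
    assert (Hc : cosh (nu * t) = (exp (nu * t) + exp (nu * - t))/2).
    { unfold cosh. replace (nu * - t) with (- (nu * t)) by ring. reflexivity. }
    rewrite Hc.
    pose proof (exp_pos (nu*t)). pose proof (exp_pos (nu * - t)). pose proof (exp_pos (- Z * cosh t)).
    nra. }
  assert (St5 : RInt (fun t => 2 * F t) 0 M = 2 * RInt F 0 M).
  { apply (RInt_scal (V:=R_CompleteNormedModule) F 0 M 2). unfold F; exri. }
  pose proof (BesselK_ge z nu hz hnu M HM0). fold F in H.
  lra.
Qed.


Lemma W_spec x : 0 < x -> 0 < LambertW0 x /\ LambertW0 x * exp (LambertW0 x) = x.
Proof.
  intro Hx.
  assert (Ex : exists w, -1 <= w /\ w * exp w = x).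
  { destruct (IVT (fun w => w * exp w - x) 0 x) as [w [Hw1 Hw2]].
    - apply derivable_continuous. reg.
    - lra.
    - rewrite exp_0. lra.
    - pose proof (exp_ineq1 x ltac:(lra)). nra.
    - exists w. split; lra. }
  pose proof (epsilon_spec (inhabits 0) (fun w => -1 <= w /\ w * exp w = x) Ex) as [H1 H2].
  unfold LambertW0. split; [|exact H2].
  set (w := epsilon (inhabits 0) (fun w => -1 <= w /\ w * exp w = x)) in *.
  pose proof (exp_pos w).
  destruct (Rle_or_lt w 0); [|lra]. nra.
Qed.

Lemma ln_sqrt' y : 0 < y -> ln (sqrt y) = ln y / 2.
Proof.
  intro Hy. pose proof (sqrt_lt_R0 y Hy).
  rewrite <- (sqrt_sqrt y) at 2 by lra. rewrite ln_mult by lra. field.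
Qed.

Theorem proposition1 (B z nu : R) (hB : 0 < B) (hz : 0 < z) (hnu : 1 <= nu) :
  let z0 := Rmax z (PI / (B ^ 2 * exp 1)) in
  let L := ln B + z0 - / 2 * ln (PI / (z0 * exp 1)) in
  nu >= / 2 + L / LambertW0 (2 / (z0 * exp 1) * L) ->
  BesselK nu z > B.
Proof.
  intros z0 L Hc.
  assert (He : 0 < exp 1) by apply exp_pos.
  assert (HPI : 0 < PI) by apply PI_RGT_0.
  pose proof PI_ub32 as HPIu.
  assert (Hzz : z <= z0) by apply Rmax_l.
  assert (Hz0 : 0 < z0) by lra.
  assert (HB2 : 0 < B^2) by nra.
  assert (HLz : z0 <= L).
  { assert (PI / (B ^ 2 * exp 1) <= z0) by apply Rmax_r.
    assert (PI / (z0 * exp 1) <= B^2).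
    { apply (Rmult_le_reg_r (z0 * exp 1)). nra.
      unfold Rdiv. rewrite Rmult_assoc, Rinv_l by nra.
      apply (Rmult_le_compat_r (B^2 * exp 1)) in H; [|nra].
      unfold Rdiv in H. rewrite Rmult_assoc, Rinv_l in H by nra. nra. }
    assert (ln (PI / (z0 * exp 1)) <= ln (B^2)) by (apply ln_le; auto; apply Rdiv_lt_0_compat; nra).
    replace (B^2) with (B*B) in H1 by ring. rewrite ln_mult in H1 by lra.
    unfold L. lra. }
  set (x := 2 / (z0 * exp 1) * L) in *.
  assert (Hx : 0 < x) by (unfold x; apply Rmult_lt_0_compat; [apply Rdiv_lt_0_compat; nra| lra]).
  destruct (W_spec x Hx) as [HW0 HW].
  set (W := LambertW0 x) in *.
  set (a := nu - /2).
  assert (Ha : L / W <= a) by (unfold a; lra).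
  assert (Ha0 : 0 < a) by (pose proof (Rdiv_lt_0_compat L W ltac:(lra) HW0); lra).
  assert (HeW : exp W <= 2 * a / (z0 * exp 1)).
  { assert (exp W = x / W) by (field_simplify_eq; [lra|lra]).
    rewrite H. unfold x.
    apply (Rmult_le_reg_r W); auto.
    replace (2 / (z0 * exp 1) * L / W * W) with (2 / (z0 * exp 1) * L) by (field; split; nra).
    apply (Rmult_le_compat_l W) in Ha; [|lra].
    replace (W * (L / W)) with L in Ha by (field; lra).
    replace (2 * a / (z0 * exp 1) * W) with (2 / (z0 * exp 1) * (W * a)) by (field; nra).
    apply Rmult_le_compat_l; [apply Rlt_le, Rdiv_lt_0_compat; nra| lra]. }
  assert (HlnW : W <= ln (2 * a / (z0 * exp 1))).
  { rewrite <- (ln_exp W) at 1. apply ln_le; auto. apply exp_pos. }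
  assert (HaL : L <= a * ln (2 * a / (z0 * exp 1))).
  { apply Rle_trans with (L / W * W). right; field; lra.
    apply Rmult_le_compat; try lra. apply Rlt_le, Rdiv_lt_0_compat; lra. }
  assert (E1 : ln (2*a/(z0*exp 1)) = ln (2*a) - ln z0 - 1).
  { rewrite ln_div by nra. rewrite (ln_mult z0) by lra. rewrite ln_exp. ring. }
  assert (E2 : ln (PI/(z0*exp 1)) = ln PI - ln z0 - 1).
  { rewrite ln_div by nra. rewrite (ln_mult z0) by lra. rewrite ln_exp. ring. }
  rewrite E1 in HaL. unfold L in HaL. rewrite E2 in HaL.
  set (s := sqrt (nu^2 + z0^2)).
  assert (Hs0 : 0 < s) by (apply sqrt_lt_R0; nra).
  assert (Hs2 : s * s = nu^2 + z0^2) by (apply sqrt_sqrt; nra).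
  assert (Hsnu : nu <= s) by nra.
  assert (Hsz : z0 <= s) by nra.
  assert (Hsu : s <= nu + z0) by nra.
  set (c := ln ((nu + s) / z0)).
  set (h := sqrt (PI / (nu + z0))).
  assert (Hh0 : 0 < h) by (apply sqrt_lt_R0; apply Rdiv_lt_0_compat; lra).
  assert (Hh2 : h * h = PI / (nu + z0)) by (apply sqrt_sqrt; apply Rlt_le, Rdiv_lt_0_compat; lra).
  assert (Hcosh : cosh c = s / z0).
  { unfold cosh, c. rewrite exp_Ropp, exp_ln by (apply Rdiv_lt_0_compat; lra).
    field_simplify_eq; [nra | split; lra]. }
  pose proof (K_lower z z0 nu c h hz Hzz ltac:(lra) Hh0) as HK.
  rewrite Hcosh in HK.
  set (q := (exp h - exp (- h)) / 2 / h) in *.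
  replace (- z0 * (s / z0) * q) with (- s * q) in HK by (field; lra).
  assert (Hh2le : h * h <= PI) by (rewrite Hh2; apply Rmult_le_reg_r with (nu+z0); [lra|];
        unfold Rdiv; rewrite Rmult_assoc, Rinv_l by lra; nra).
  assert (Hq : (q - 1) * s <= 6515/10000).
  { pose proof (sinh_ub h ltac:(nra)) as Hsh.
    set (P := h^2/6 + h^4/120 + h^6/1000).
    assert (HqP : q - 1 <= P).
    { unfold q, P. apply (Rmult_le_reg_r h); auto.
      replace (((exp h - exp (- h)) / 2 / h - 1) * h) with ((exp h - exp (- h)) / 2 - h) by (field; lra).
      lra. }
    assert (HP0 : 0 <= P) by (unfold P; nra).
    assert (HPs : P * (nu + z0) = PI/6 + PI * (h*h)/120 + PI * (h*h)^2/1000).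
    { unfold P. replace PI with (h * h * (nu + z0)) at 1 2 3 by (rewrite Hh2; field; lra). field. }
    assert ((q-1)*s <= P * (nu+z0)).
    { destruct (Rle_or_lt 0 (q-1)). apply Rle_trans with (P * s); nra. nra. }
    assert (Hhh0 : 0 < h * h) by nra.
    assert (A1 : PI * (h*h) <= 16/5 * (16/5)) by (apply Rmult_le_compat; lra).
    assert (A2 : (h*h)^2 <= (16/5)^2) by (apply pow_incr; lra).
    assert (A3 : PI * (h*h)^2 <= 16/5 * (16/5)^2) by (apply Rmult_le_compat; try lra; nra).
    lra. }
  assert (HF1 : 1/3 <= a * (ln (nu + s) - ln (2 * a))).
  { assert (ln (2 * nu) <= ln (nu + s)) by (apply ln_le; lra).
    assert (2 * nu = 2 * a * (1 + / (2 * a))) by (unfold a in *; field; lra).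
    rewrite H0, ln_mult in H by (first [nra | apply Rplus_lt_0_compat; [lra| apply Rinv_0_lt_compat; lra]]).
    pose proof (ln_1px_lb (/ (2*a)) ltac:(apply Rlt_le, Rinv_0_lt_compat; lra)).
    replace (2 * / (2 * a) / (2 + / (2 * a))) with (2 / (4*a+1)) in H1 by (field; lra).
    assert (1/3 <= a * (2/(4*a+1))).
    { replace (a*(2/(4*a+1))) with (1/3 + (2*a-1)/(3*(4*a+1))) by (field; lra).
      assert (0 <= (2*a-1)/(3*(4*a+1))) by (apply Rdiv_le_0_compat; unfold a in *; lra). lra. }
    nra. }
  assert (HF2 : 1/3 <= /2 * (ln (nu + s) - ln (nu + z0)) + (nu + z0 - s)).
  { pose proof (ln_1px_lb 1 ltac:(lra)) as Hln2. replace (1+1) with 2 in Hln2 by ring.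
    set (y := 2 * (nu + z0) / (nu + s)).
    assert (Hy : 0 < y) by (unfold y; apply Rdiv_lt_0_compat; lra).
    pose proof (ln_le_sub1 y Hy).
    unfold y in H. rewrite ln_div, ln_mult in H by lra.
    assert (2 * (nu + z0) / (nu + s) - 1 <= 2 * (nu + z0 - s)).
    { apply (Rmult_le_reg_r (nu + s)); [lra|].
      replace ((2 * (nu + z0) / (nu + s) - 1) * (nu + s)) with (nu + 2*z0 - s) by (field; lra).
      nra. }
    lra. }
  assert (Hlnh : ln h = (ln PI - ln (nu + z0))/2).
  { unfold h. rewrite ln_sqrt', ln_div by (try apply Rdiv_lt_0_compat; lra). reflexivity. }
  assert (Hlnc : c = ln (nu + s) - ln z0) by (unfold c; apply ln_div; lra).
  assert (Hlt : ln B < ln h + (- s * q + nu * c)).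
  { rewrite Hlnh, Hlnc. unfold a in *. nra. }
  apply Rlt_le_trans with (h * exp (- s * q + nu * c)); [|exact HK].
  rewrite <- (exp_ln B) by lra.
  replace (h * exp (- s * q + nu * c)) with (exp (ln h + (- s * q + nu * c)))
    by (rewrite exp_plus, exp_ln; auto).
  apply exp_increasing. exact Hlt.
Qed.
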